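(* Let $\tilde\Gamma$ be a finitely generated group. Then $|G|$ divides $\#\mathrm{Hom}(\tilde\Gamma,G)$ for every finite group $G$ if and only if the abelianization $\tilde\Gamma/[\tilde\Gamma,\tilde\Gamma]$ is infinite. *)

(* Defs.v *)
From HB Require Import structures.
From mathcomp Require Import all_boot all_fingroup.
Set Implicit Arguments. Unset Strict Implicit. Unset Printing Implicit Defensive.
Local Open Scope group_scope.

Inductive in_gen (Gam : groupType) (s : seq Gam) : Gam -> Prop :=
  | in_gen_mem x : x \in s -> in_gen s x
  | in_gen_one : in_gen s 1
  | in_gen_inv x : in_gen s x -> in_gen s x^-1
  | in_gen_mul x y : in_gen s x -> in_gen s y -> in_gen s (x * y).

Definition finitely_generated (Gam : groupType) : Prop :=
  exists s : seq Gam, forall x : Gam, in_gen s x.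

Inductive in_derived (Gam : groupType) : Gam -> Prop :=
  | in_derived_comm x y : in_derived [~ x, y]
  | in_derived_one : in_derived 1
  | in_derived_inv x : in_derived x -> in_derived x^-1
  | in_derived_mul x y : in_derived x -> in_derived y -> in_derived (x * y).

Definition abelianization_finite (Gam : groupType) : Prop :=
  exists reps : seq Gam, forall x : Gam,
    exists2 r, r \in reps & in_derived (x * r^-1).

Definition is_hom (Gam H : groupType) (f : Gam -> H) : Prop :=
  forall x y, f (x * y) = f x * f y.

(* #Hom(Gam, G) = N : the homomorphisms (up to extensional equality)
   are enumerated bijectively by 'I_N. *)
Definition hom_card (Gam : groupType) (gT : finGroupType) (N : nat) : Prop :=
  exists fs : 'I_N -> (Gam -> gT),
    [/\ forall i, is_hom (fs i),
        forall i j, (forall x, fs i x = fs j x) -> i = j &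
        forall f : Gam -> gT, is_hom f -> exists i, forall x, f x = fs i x].

(* Main.v *)
Require Import Defs.
From HB Require Import structures.
From mathcomp Require Import all_boot all_order all_fingroup all_algebra.
From mathcomp Require Import all_solvable ring zify.
From Stdlib Require Import Classical ClassicalEpsilon.
Set Implicit Arguments. Unset Strict Implicit. Unset Printing Implicit Defensive.
Import Order.TTheory GRing.Theory Num.Theory.

Section Vec.
Local Open Scope ring_scope.

Fixpoint vadd (a b : seq int) : seq int :=
  match a, b with x :: a', y :: b' => (x + y) :: vadd a' b' | _, _ => [::] end.
Definition vscale (k : int) (a : seq int) := map (fun x => k * x) a.
Fixpoint dot (a b : seq int) : int :=
  match a, b with x :: a', y :: b' => x * y + dot a' b' | _, _ => 0 end.
Definition vsub a b := vadd a (vscale (-1) b).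

Lemma size_vadd a b : size a = size b -> size (vadd a b) = size a.
Proof. by elim: a b => [|x a IH] [|y b] //= [] /IH ->. Qed.
Lemma size_vscale k a : size (vscale k a) = size a.
Proof. by rewrite size_map. Qed.

Lemma dotDr w a b : size a = size b -> dot w (vadd a b) = dot w a + dot w b.
Proof.
elim: w a b => [|u w IH] [|x a] [|y b] //= [] /IH ->; ring.
Qed.
Lemma dotZr w k a : dot w (vscale k a) = k * dot w a.
Proof. elim: w a => [|u w IH] [|x a] //=; rewrite ?IH; ring. Qed.
Lemma dotZl w k a : dot (vscale k w) a = k * dot w a.
Proof. elim: w a => [|u w IH] [|x a] //=; rewrite ?IH; ring. Qed.
Lemma dot_nseq0 n a : dot (nseq n 0) a = 0.
Proof. elim: n a => [|n IH] [|x a] //=; rewrite IH; ring. Qed.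
Lemma dot_sq_ge0 w : 0 <= dot w w.
Proof. elim: w => [|u w IH] //=; apply: addr_ge0 => //; exact: sqr_ge0. Qed.

Lemma nth_vadd a b i : size a = size b -> nth 0 (vadd a b) i = nth 0 a i + nth 0 b i.
Proof.
elim: a b i => [|x a IH] [|y b] [|i] //= []; rewrite ?addr0 //; exact: IH.
Qed.
Lemma nth_vscale k a i : nth 0 (vscale k a) i = k * nth 0 a i.
Proof. elim: a i => [|x a IH] [|i] //=; by rewrite mulr0. Qed.
Lemma vadd_nseq0 a : vadd (nseq (size a) 0) a = a.
Proof. elim: a => [|x a IH] //=; by rewrite add0r IH. Qed.
Lemma size_nseq' m : size (nseq m (0:int)) = m. Proof. exact: size_nseq. Qed.

Definition qfin n (R : seq int -> Prop) :=
  exists reps : seq (seq int), forall x, size x = n ->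
    exists2 r, r \in reps & (size r = n /\ R (vsub x r)).

Lemma vec_main n (R : seq int -> Prop) :
  R (nseq n 0) ->
  (forall x y k, size x = n -> size y = n -> R x -> R y -> R (vadd x (vscale k y))) ->
  ~ qfin n R ->
  exists w, [/\ size w = n, 0 < dot w w & forall x, size x = n -> R x -> dot w x = 0].
Proof.
elim: n R => [|n IH] R H0 Hc Hq.
  case: Hq; exists [:: [::]] => x /size0nil -> ; exists [::] => //.
have Hs : forall a c, size a = n.+1 -> R a -> R (vscale c a).
  move=> a c sa Ra; have := Hc (nseq n.+1 0) a c (size_nseq _ _) sa H0 Ra.
  by rewrite -sa -(size_vscale c) vadd_nseq0.
pose R' x := R (0 :: x).
have H0' : R' (nseq n 0) by [].
have Hc' : forall x y k, size x = n -> size y = n -> R' x -> R' y -> R' (vadd x (vscale k y)).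
  move=> x y k sx sy Rx Ry; have := Hc (0 :: x) (0 :: y) k.
  by rewrite /= mulr0 addr0 sx sy; apply.
case: (classic (exists j y, [/\ size y = n, R (j :: y) & j != 0])) => [[j1 [y1 [sy Rjy jn0]]]|Hno]; last first.
  exists (1 :: nseq n 0); split; first by rewrite /= size_nseq.
    by rewrite /= dot_nseq0 mulr1 addr0.
  move=> [|j x] //= [sx] Rx; rewrite dot_nseq0 addr0 mul1r.
  apply/eqP; apply/negPn/negP => jn0; apply: Hno; by exists j, x.
have [k [y' [k_gt0 sy' Rky]]] : exists k y', [/\ 0 < k, size y' = n & R (k :: y')].
  case: (ltrgtP 0 j1) => [jp|jn|j0]; first by exists j1, y1.
    exists (- j1), (vscale (-1) y1); split; first by rewrite oppr_gt0.
      by rewrite size_vscale.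
    have := Hs _ (-1) _ Rjy; rewrite /= sy mulN1r; exact.
  by rewrite -j0 eqxx in jn0.
have HqR' : ~ qfin n R'.
  move=> [reps' Hreps']; apply: Hq.
  exists [seq (i%:Z :: r) | i <- iota 0 (absz k), r <- reps'].
  move=> [|j x] //= [sx].
  pose q := (j %/ k)%Z; pose j0 := (j %% k)%Z.
  have sx1 : size (vadd x (vscale (-q) y')) = n by rewrite size_vadd ?size_vscale ?sx ?sy'.
  have [r rin [sr Rr]] := Hreps' _ sx1.
  have j0ge : 0 <= j0 by apply: modz_ge0; rewrite gt_eqF.
  have j0lt : j0 < k by rewrite /j0 -[X in _ < X]gtr0_norm // ltz_mod // gt_eqF.
  exists (j0 :: r); last first.
    split; first by rewrite /= sr.
    have E : vadd (0 :: vsub (vadd x (vscale (- q) y')) r) (vscale q (k :: y')) =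
              vsub (j :: x) (j0 :: r).
      rewrite /vsub /=; congr (_ :: _).
        rewrite /q /j0 mulN1r; rewrite [X in _ = X + _](divz_eq j k); ring.
      apply: (@eq_from_nth _ 0).
        by rewrite !(size_vadd, size_vscale) ?sx ?sr ?sy' // !(size_vadd, size_vscale) ?sx ?sr ?sy'.
      move=> i _; rewrite !(nth_vadd, nth_vscale) ?(size_vadd, size_vscale) ?sx ?sr ?sy' //;
        first ring; by rewrite ?(size_vadd, size_vscale) ?sx ?sy'.
    rewrite -E; apply: Hc => //; last by rewrite /= sy'.
    by rewrite /= /vsub size_vadd ?size_vscale ?sx1 ?sr.
  have -> : j0 = (absz j0)%:Z by rewrite gez0_abs.
  apply: allpairs_f => //; rewrite mem_iota add0n.
  by rewrite -ltz_nat gez0_abs // gtz0_abs.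
have [w' [sw' pw' Hw']] := IH R' H0' Hc' HqR'.
exists ((- dot w' y') :: vscale k w'); split.
- by rewrite /= size_vscale sw'.
- rewrite /= dotZl dotZr; apply: ltr_wpDl; first exact: sqr_ge0.
  by rewrite !mulr_gt0.
- move=> [|j x] //= [sx] Rx.
  have Rz : R' (vadd (vscale k x) (vscale (-j) y')).
    have := Hc _ _ (-j) _ _ (Hs _ k _ Rx) Rky.
    rewrite /= ?size_vscale ?sx ?sy' // /R' => H; rewrite -[X in R (X :: _)](_ : k * j + - j * k = 0).
      by apply: H.
    ring.
  have := Hw' _ _ Rz; rewrite dotDr ?dotZr ?dotZl ?size_vscale ?sx ?sy' //.
  move=> E; rewrite -[RHS](E _); first ring; by rewrite size_vadd ?size_vscale ?sx ?sy'.
Qed.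
End Vec.
Section Grp.
Local Open Scope group_scope.
Variable G : groupType.
Implicit Types x y z : G.

Definition zpow x (n : int) : G :=
  match n with Posz m => x ^+ m | Negz m => (x ^+ m.+1)^-1 end.

Lemma zpow0 x : zpow x 0 = 1. Proof. by []. Qed.
Lemma zpow1 x : zpow x 1 = x. Proof. by []. Qed.

Lemma zpowS x (a : int) : zpow x (a + 1)%R = zpow x a * x.
Proof.
case: a => [n|n].
  have -> : (Posz n + 1 = Posz n.+1)%R by rewrite -PoszD addn1.
  by rewrite /= expgSr.
case: n => [|n].
  have -> : (Negz 0 + 1 = 0 :> int)%R by [].
  by rewrite /= expg1 mulVg.
have -> : (Negz n.+1 + 1 = Negz n :> int)%R by rewrite !NegzE; lia.
by rewrite /= (expgS x n.+1) invMg mulgVK.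

Qed.

Lemma zpowN x (a : int) : zpow x (- a)%R = (zpow x a)^-1.
Proof.
case: a => [[|n]|n] /=; first by rewrite invg1.
  by [].
by rewrite invgK.
Qed.

Lemma zpowDn x (a : int) (n : nat) : zpow x (a + n%:Z)%R = zpow x a * zpow x n.
Proof.
elim: n => [|n IH]; first by rewrite addr0 mulg1.
rewrite -addn1 PoszD addrA zpowS IH zpowS /= -mulgA.
by [].
Qed.

Lemma zpowD x (a b : int) : zpow x (a + b)%R = zpow x a * zpow x b.
Proof.
case: b => [n|n]; first exact: zpowDn.
have := zpowDn x (a + Negz n)%R n.+1.
rewrite NegzE -addrA addNr addr0 => E.
by rewrite E zpowN mulgK.
Qed.

Lemma zpowM1 x (a : int) : zpow x (a - 1)%R = zpow x a * x^-1.
Proof. by rewrite zpowD. Qed.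

Lemma conj_in_derived d x : in_derived d -> in_derived (x^-1 * d * x).
Proof.
move=> Hd; have -> : x^-1 * d * x = d * [~ d, x].
  by rewrite commgEl /conjg mulKVg mulgA.
exact: in_derived_mul Hd (in_derived_comm _ _).
Qed.

Definition cong x y := in_derived (x * y^-1).

Lemma cong_refl x : cong x x. Proof. rewrite /cong mulgV; exact: in_derived_one. Qed.
Lemma cong_sym x y : cong x y -> cong y x.
Proof. by rewrite /cong => /in_derived_inv; rewrite invMg invgK. Qed.
Lemma cong_trans x y z : cong x y -> cong y z -> cong x z.
Proof.
rewrite /cong => H1 H2; have := in_derived_mul H1 H2.
by rewrite mulgA mulgVK.
Qed.
Lemma cong_mul x x' y y' : cong x x' -> cong y y' -> cong (x * y) (x' * y').
Proof.
rewrite /cong => H1 H2.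
have := in_derived_mul (conj_in_derived x^-1 H2) H1.
by rewrite invgK invMg !mulgA mulgVK.
Qed.
Lemma cong_inv x x' : cong x x' -> cong x^-1 x'^-1.
Proof.
rewrite /cong => H; have := conj_in_derived x (in_derived_inv H).
by rewrite invMg !invgK !mulgA mulgVK.
Qed.
Lemma cong_comm x y : cong (x * y) (y * x).
Proof.
rewrite /cong; have := in_derived_comm x^-1 y^-1.
by rewrite /commg /conjg !invgK invMg !mulgA.
Qed.
Lemma cong_1 d : in_derived d -> cong d 1.
Proof. by rewrite /cong invg1 mulg1. Qed.
Lemma cong_in_derived d : cong d 1 -> in_derived d.
Proof. by rewrite /cong invg1 mulg1. Qed.

End Grp.

Section Hom.
Local Open Scope group_scope.
Variables (H K : groupType) (f : H -> K).
Hypothesis hf : is_hom f.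

Lemma hom1 : f 1 = 1.
Proof. by apply: (@mulIg _ (f 1)); rewrite -hf !mul1g. Qed.
Lemma homV x : f x^-1 = (f x)^-1.
Proof. by apply: (@mulIg _ (f x)); rewrite -hf !mulVg hom1. Qed.
Lemma homX x n : f (x ^+ n) = (f x) ^+ n.
Proof. elim: n => [|n IH]; first exact: hom1. by rewrite !expgS hf IH. Qed.
Lemma homZ x z : f (zpow x z) = zpow (f x) z.
Proof. case: z => n /=; by rewrite ?homV homX. Qed.
Lemma homR x y : f [~ x, y] = [~ f x, f y].
Proof. by rewrite /commg /conjg !hf !homV. Qed.
End Hom.

Section Word.
Local Open Scope group_scope.
Variable G : groupType.
Implicit Types x y z : G.

Fixpoint word (s : seq G) (e : seq int) : G :=
  match s, e with a :: s', k :: e' => zpow a k * word s' e' | _, _ => 1 end.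

Lemma cong_swap (a b c d : G) : cong (a * b * (c * d)) (a * c * (b * d)).
Proof.
rewrite !mulgA -(mulgA a b c) -(mulgA a c b).
by apply: cong_mul (cong_refl _); apply: cong_mul (cong_refl _) (cong_comm _ _).
Qed.

Lemma word_add s e e' : size e = size e' ->
  cong (word s (vadd e e')) (word s e * word s e').
Proof.
elim: e s e' => [|k e IH] [|a s] [|k' e'] //=; rewrite ?mulg1; try (move=> *; exact: cong_refl).
case=> /IH H.
rewrite zpowD; apply: cong_trans (cong_mul (cong_refl _) (H s)) _.
exact: cong_swap.
Qed.

Lemma word_neg s e : cong (word s (vscale (-1) e)) (word s e)^-1.
Proof.
elim: e s => [|k e IH] [|a s] /=; rewrite ?invg1; try exact: cong_refl.
rewrite mulN1r zpowN invMg.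
apply: cong_trans (cong_mul (cong_refl _) (IH s)) (cong_comm _ _).
Qed.

Lemma word_nseq0 s n : word s (nseq n 0%R) = 1.
Proof. by elim: n s => [|n IH] [|a s] //=; rewrite IH mulg1. Qed.

Lemma mem_word s x : x \in s -> exists e, size e = size s /\ word s e = x.
Proof.
elim: s => [|a s IH] //; rewrite inE => /orP [/eqP ->|/IH [e [se we]]].
  by exists (1%R :: nseq (size s) 0%R); rewrite /= size_nseq word_nseq0 mulg1.
by exists (0%R :: e); rewrite /= se we mul1g.
Qed.

Lemma gen_word s x : in_gen s x -> exists e, size e = size s /\ cong x (word s e).
Proof.
elim => {x}.
- move=> x /mem_word [e [se <-]]; exists e; split => //; exact: cong_refl.
- by exists (nseq (size s) 0%R); rewrite size_nseq word_nseq0; split => //; exact: cong_refl.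
- move=> x _ [e [se c]]; exists (vscale (-1) e); rewrite size_vscale; split => //.
  exact: cong_trans (cong_inv c) (cong_sym (word_neg _ _)).
- move=> x y _ [e [se c]] _ [e' [se' c']]; exists (vadd e e').
  rewrite size_vadd ?se ?se' //; split => //.
  exact: cong_trans (cong_mul c c') (cong_sym (word_add _ (etrans se (esym se')))).
Qed.

Definition Rw s e := cong (word s e) 1.

Lemma Rw_add s a b : size a = size b -> Rw s a -> Rw s b -> Rw s (vadd a b).
Proof.
move=> sab Ra Rb; apply: cong_trans (word_add s sab) _.
by rewrite -(mulg1 1); apply: cong_mul.
Qed.
Lemma Rw_neg s a : Rw s a -> Rw s (vscale (-1) a).
Proof.
move=> Ra; apply: cong_trans (word_neg s a) _; rewrite -invg1; exact: cong_inv.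
Qed.
Lemma vscaleS k a : vscale (k + 1) a = vadd (vscale k a) a.
Proof. elim: a => [|x a IH] //=; rewrite IH; congr (_ :: _); ring. Qed.
Lemma vscaleP k a : vscale (k - 1) a = vadd (vscale k a) (vscale (-1) a).
Proof. elim: a => [|x a IH] //=; rewrite IH; congr (_ :: _); ring. Qed.
Lemma vscale0 a : vscale 0 a = nseq (size a) 0%R.
Proof. elim: a => [|x a IH] //=; by rewrite IH mul0r. Qed.

Lemma Rw_scale s k a : Rw s a -> Rw s (vscale k a).
Proof.
move=> Ra; elim/int_rect: k.
- rewrite vscale0 /Rw word_nseq0; exact: cong_refl.
- move=> n IH; rewrite -addn1 PoszD vscaleS; apply: Rw_add IH Ra.
  by rewrite size_vscale.
- move=> n IH; rewrite -addn1 PoszD opprD vscaleP; apply: Rw_add IH (Rw_neg Ra).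
  by rewrite !size_vscale.
Qed.

End Word.

Definition asb (P : Prop) : bool := if excluded_middle_informative P then true else false.
Lemma asbP (P : Prop) : reflect P (asb P).
Proof. rewrite /asb; case: excluded_middle_informative => h; by constructor. Qed.

Section Psi.
Local Open Scope group_scope.
Variable Gam : groupType.

Definition ahom (psi : Gam -> int) := forall x y, psi (x * y) = (psi x + psi y)%R.

Lemma exists_psi0 : finitely_generated Gam -> ~ abelianization_finite Gam ->
  exists psi : Gam -> int, ahom psi /\ exists x, psi x != 0%R.
Proof.
move=> [s Hs] Hnf.
have Hex : forall x, exists e, size e = size s /\ cong x (word s e) := fun x => gen_word (Hs x).
have vE : forall e r : seq int, size e = size r -> e = vadd (vsub e r) r.
  move=> e r ser; apply: (@eq_from_nth _ 0%R).
    by rewrite /vsub !size_vadd ?size_vscale.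
  move=> i _; rewrite /vsub !(nth_vadd, nth_vscale) ?(size_vadd, size_vscale) //; ring.
have Hq : ~ qfin (size s) (Rw s).
  move=> [vreps Hv]; apply: Hnf; exists (map (word s) vreps) => x.
  have [e [se ce]] := Hex x; have [r rin [sr Rr]] := Hv e se.
  exists (word s r); first exact: map_f.
  change (cong x (word s r)); apply: cong_trans ce _.
  rewrite {1}(vE e r); last by rewrite se sr.
  apply: cong_trans (word_add _ _) _; first by rewrite /vsub size_vadd ?size_vscale ?se ?sr.
  rewrite -{2}(mul1g (word s r)); exact: cong_mul Rr (cong_refl _).
have H0 : Rw s (nseq (size s) 0%R) by rewrite /Rw word_nseq0; exact: cong_refl.
have Hc : forall x y k, size x = size s -> size y = size s -> Rw s x -> Rw s y ->
    Rw s (vadd x (vscale k y)).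
  move=> x y k sx sy Rx Ry; apply: Rw_add Rx (Rw_scale k Ry).
  by rewrite size_vscale sx sy.
have [w [sw pw Hw]] := vec_main H0 Hc Hq.
pose E x := sval (constructive_indefinite_description _ (Hex x)).
have HE : forall x, size (E x) = size s /\ cong x (word s (E x)).
  move=> x; exact: svalP (constructive_indefinite_description _ (Hex x)).
have Key : forall x e, size e = size s -> cong x (word s e) -> dot w (E x) = dot w e.
  move=> x e se ce; have [sEx cEx] := HE x.
  have R1 : Rw s (vsub (E x) e).
    apply: cong_trans (word_add _ _) _; first by rewrite size_vscale sEx se.
    apply: cong_trans (cong_mul (cong_refl _) (word_neg _ _)) _.
    rewrite -(mulgV x); apply: cong_mul; first exact: cong_sym.
    exact: cong_inv (cong_sym ce).
  have := Hw _ _ R1; rewrite /vsub dotDr ?dotZr ?size_vscale ?sEx ?se //.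
  move=> H; have /eqP := H (etrans (size_vadd (etrans sEx (esym (etrans (size_vscale _ _) se)))) sEx).
  by rewrite mulN1r subr_eq0 => /eqP.
exists (fun x => dot w (E x)); split.
  move=> x y /=; have [sx cx] := HE x; have [sy cy] := HE y.
  rewrite (Key (x * y) (vadd (E x) (E y))) ?dotDr ?sx ?sy //.
    by rewrite size_vadd ?sx ?sy.
  exact: cong_trans (cong_mul cx cy) (cong_sym (word_add _ (etrans sx (esym sy)))).
exists (word s w); rewrite (Key _ w sw (cong_refl _)); exact: lt0r_neq0.
Qed.

Lemma ahom1 psi : ahom psi -> psi 1 = 0%R.
Proof. move=> h; have E := h 1 1; rewrite mulg1 in E. by apply: (@addrI _ (psi 1)); rewrite addr0 -E. Qed.
Lemma ahomV psi x : ahom psi -> psi x^-1 = (- psi x)%R.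
Proof. move=> h; apply/eqP; rewrite -subr_eq0 opprK -h mulVg; by rewrite ahom1. Qed.
Lemma ahomX psi x n : ahom psi -> psi (x ^+ n) = ((Posz n) * psi x)%R.
Proof.
move=> h; elim: n => [|n IH]; first by rewrite mul0r ahom1.
by rewrite expgS h IH -addn1 PoszD; ring.
Qed.
Lemma ahomZ psi x z : ahom psi -> psi (zpow x z) = (z * psi x)%R.
Proof.
move=> h; case: z => n /=; first exact: ahomX.
by rewrite ahomV // ahomX // NegzE mulNr.
Qed.

Lemma exists_psi : finitely_generated Gam -> ~ abelianization_finite Gam ->
  exists (psi : Gam -> int) (t : Gam), ahom psi /\ psi t = 1%R.
Proof.
move=> fg nf; have [p0 [h0 [x0 nz0]]] := exists_psi0 fg nf.
pose P n := (0 < n)%N && asb (exists x, p0 x = (Posz n)).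
have exP : exists n, P n.
  case: (ltrgtP 0%R (p0 x0)) => [pos|neg|z]; last by rewrite -z eqxx in nz0.
    exists (absz (p0 x0)); rewrite /P; apply/andP; split; first by rewrite absz_gt0.
    by apply/asbP; exists x0; rewrite gtz0_abs.
  exists (absz (p0 x0)); rewrite /P; apply/andP; split; first by rewrite absz_gt0.
  apply/asbP; exists x0^-1; rewrite ahomV // ltz0_abs //.
have [d /andP [d0 /asbP [t pt]] dmin] := ex_minnP exP.
have dnz : ((Posz d) != 0)%R by rewrite eqz_nat -lt0n.
have dv : forall x, ((Posz d) %| p0 x)%Z.
  move=> x; apply/dvdz_mod0P; set r := (p0 x %% (Posz d))%Z.
  have rge : (0 <= r)%R by apply: modz_ge0.
  have rlt : (r < (Posz d))%R.
    by rewrite /r -[X in (_ < X)%R]gtr0_norm ?ltz_mod // ltz_nat.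
  have er : p0 (x * zpow t (- (p0 x %/ (Posz d))%Z)) = r.
    rewrite h0 ahomZ // pt /r {1}(divz_eq (p0 x) (Posz d)); ring.
  apply/eqP; apply/negPn/negP => rnz.
  have : (d <= absz r)%N.
    apply: dmin; rewrite /P; apply/andP; split; first by rewrite absz_gt0.
    by apply/asbP; exists (x * zpow t (- (p0 x %/ (Posz d))%Z)); rewrite er gez0_abs.
  by rewrite -lez_nat gez0_abs // leNgt rlt.
exists (fun x => (p0 x %/ (Posz d))%Z), t; split.
  by move=> x y /=; rewrite h0 divzDl.
by rewrite /= pt divzz dnz.
Qed.

End Psi.

Section DirA.
Local Open Scope group_scope.

Lemma dirA (Gam : groupType) :
  (forall (gT : finGroupType) (N : nat), hom_card Gam gT N -> (#|gT| %| N)%N) ->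
  ~ abelianization_finite Gam.
Proof.
move=> H [reps Hr].
have [p lt prp] := prime_above (size reps).
have p0 := prime_gt0 prp.
pose q := p.-1; have pE : p = q.+1 by rewrite /q prednK.
have triv : forall f : Gam -> 'I_q.+1, is_hom f -> forall x, f x = 1%g.
  move=> f hf.
  have kill : forall d, in_derived d -> f d = 1%g.
    move=> d; elim => {d}.
    - move=> x y; by rewrite homR // /commg /conjg (Zp_mulgC (f x)) mulKg mulVg.
    - exact: hom1.
    - by move=> x _ IH; rewrite homV // IH invg1.
    - by move=> x y _ IH1 _ IH2; rewrite hf IH1 IH2 mulg1.
  have fr : forall x, exists2 r, r \in reps & f x = f r.
    move=> x; have [r rin dr] := Hr x; exists r => //.
    apply: divg1_eq; by rewrite -homV // -hf kill.
  move=> x; apply/eqP; apply/negPn/negP => nx.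
  set a := f x in nx.
  have oa : #[a]%g = p.
    have : (#[a]%g %| #|[set: 'I_q.+1]|)%N by apply: order_dvdG; rewrite inE.
    rewrite cardsT card_ord -pE => /(primeP prp).2 /orP [|/eqP //].
    by rewrite order_eq1 (negPf nx).
  have : (size [seq a ^+ i | i <- iota 0 p] <= size (map f reps))%N.
    apply: uniq_leq_size.
      rewrite map_inj_in_uniq ?iota_uniq // => i j; rewrite !mem_iota !add0n => ip jp /eqP.
      by rewrite eq_expg_mod_order oa !modn_small // => /eqP.
    move=> y /mapP [i _ ->]; rewrite /a -homX //; have [r rin ->] := fr (x ^+ i).
    exact: map_f.
  by rewrite size_map size_iota size_map leqNgt lt.
have hc : hom_card Gam ('I_q.+1 : finGroupType) 1%N.
  exists (fun _ _ => 1%g); split.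
  - by move=> _ x y; rewrite mulg1.
  - by move=> i j _; apply: val_inj; case: i j => [[]] // ? [[]].
  - by move=> f hf; exists ord0 => x; exact: triv.
have := H _ _ hc; rewrite card_ord dvdn1 => /eqP q0.
by move: prp; rewrite pE q0.
Qed.
End DirA.

Section Count.
Local Open Scope group_scope.
Variables (Gam : groupType) (gT : finGroupType) (psi : Gam -> int) (t : Gam).
Hypothesis hpsi : ahom psi.
Hypothesis pt : psi t = 1%R.

Lemma psiT z : psi (zpow t z) = z.
Proof. by rewrite ahomZ // pt mulr1. Qed.

Lemma psi_k x : psi (x * (zpow t (psi x))^-1) = 0%R.
Proof. by rewrite hpsi ahomV // psiT subrr. Qed.

Lemma psi_conj k : psi k = 0%R -> psi (t * k * t^-1) = 0%R /\ psi (t^-1 * k * t) = 0%R.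
Proof.
move=> hk; rewrite !hpsi !ahomV // hk pt; split; ring.
Qed.

Lemma hom_ext (f g : Gam -> gT) : is_hom f -> is_hom g ->
  (forall k, psi k = 0%R -> f k = g k) -> f t = g t -> forall x, f x = g x.
Proof.
move=> hf hg hk ht x.
rewrite -(mulgKV (zpow t (psi x)) x) hf hg (homZ hf) (homZ hg) ht hk //; exact: psi_k.
Qed.

Lemma conj_iter (f : Gam -> gT) g : is_hom f ->
  (forall k, psi k = 0%R -> f (t * k * t^-1) = g * f k * g^-1) ->
  forall z k, psi k = 0%R ->
    f (zpow t z * k * (zpow t z)^-1) = zpow g z * f k * (zpow g z)^-1.
Proof.
move=> hf hc; elim/int_rect.
- by move=> k _; rewrite !zpow0 !invg1 !mulg1 !mul1g.
- move=> n IH k hk; rewrite -addn1 PoszD !zpowS.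
  have -> : zpow t n * t * k * (zpow t n * t)^-1 = zpow t n * (t * k * t^-1) * (zpow t n)^-1.
    by rewrite invMg !mulgA.
  rewrite IH; last by case: (psi_conj hk).
  by rewrite hc // invMg !mulgA.
- move=> n IH k hk.
  have E : forall y : Gam, zpow y (- (Posz n.+1))%R = zpow y (- Posz n)%R * y^-1.
    by move=> y; rewrite -zpowM1; congr zpow; rewrite -addn1 PoszD opprD.
  have E' : forall y : gT, zpow y (- (Posz n.+1))%R = zpow y (- Posz n)%R * y^-1.
    by move=> y; rewrite -zpowM1; congr zpow; rewrite -addn1 PoszD opprD.
  rewrite E E'.
  have -> : zpow t (- Posz n)%R * t^-1 * k * (zpow t (- Posz n)%R * t^-1)^-1 =
            zpow t (- Posz n)%R * (t^-1 * k * t) * (zpow t (- Posz n)%R)^-1.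
    by rewrite invMg invgK !mulgA.
  rewrite IH; last by case: (psi_conj hk).
  have [_ hk'] := psi_conj hk.
  have H1 : f (t^-1 * k * t) = g^-1 * f k * g.
    have := hc _ hk'; rewrite (_ : t * (t^-1 * k * t) * t^-1 = k); last first.
      by rewrite !mulgA mulgV mul1g mulgK.
    move=> ->; by rewrite !mulgA mulVg mul1g mulgVK.
  by rewrite H1 invMg invgK !mulgA.
Qed.

Definition buildh (f : Gam -> gT) g := fun x => f (x * (zpow t (psi x))^-1) * zpow g (psi x).

Lemma build_hom (f : Gam -> gT) g : is_hom f ->
  (forall k, psi k = 0%R -> f (t * k * t^-1) = g * f k * g^-1) -> is_hom (buildh f g).
Proof.
move=> hf hc x y; rewrite /buildh hpsi !zpowD.
set a := psi x; set b := psi y.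
have -> : x * y * (zpow t a * zpow t b)^-1 =
    (x * (zpow t a)^-1) * (zpow t a * (y * (zpow t b)^-1) * (zpow t a)^-1).
  by rewrite invMg !mulgA mulgKV.
rewrite hf (conj_iter hf hc) //; last exact: psi_k.
by rewrite !mulgA mulgVK.
Qed.

Lemma buildh_k (f : Gam -> gT) g k : is_hom f -> psi k = 0%R -> buildh f g k = f k.
Proof. by move=> hf hk; rewrite /buildh hk !zpow0 invg1 !mulg1. Qed.

Lemma buildh_t (f : Gam -> gT) g : is_hom f -> buildh f g t = f 1 * g.
Proof. by move=> hf; rewrite /buildh pt zpow1 mulgV. Qed.

Lemma conj_hom (f : Gam -> gT) h : is_hom f -> is_hom (fun x => h * f x * h^-1).
Proof. by move=> hf x y; rewrite hf !mulgA mulgVK. Qed.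

Variables (N : nat) (fs : 'I_N -> Gam -> gT).
Hypothesis hom_fs : forall i, is_hom (fs i).
Hypothesis inj_fs : forall i j, (forall x, fs i x = fs j x) -> i = j.
Hypothesis surj_fs : forall f, is_hom f -> exists i, forall x, f x = fs i x.

Definition conjr j i h := forall k, psi k = 0%R -> fs j k = h * fs i k * h^-1.

Definition idxf (i0 : 'I_N) (f : Gam -> gT) :=
  odflt i0 [pick j | asb (forall x, f x = fs j x)].

Lemma idxfP i0 f : is_hom f -> forall x, f x = fs (idxf i0 f) x.
Proof.
move=> hf; rewrite /idxf; case: pickP => [j /asbP //|none].
have [j hj] := surj_fs hf; have := none j; by case: asbP.
Qed.

Definition Cset i := [set c : gT | asb (forall k, psi k = 0%R -> c * fs i k = fs i k * c)].
Definition Sh i h := [set j | asb (conjr j i h)].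

Lemma conjr1 j i : conjr j i 1 <-> forall k, psi k = 0%R -> fs j k = fs i k.
Proof.
by split=> H k hk; rewrite H // ?invg1 ?mulg1 ?mul1g.
Qed.

Lemma card_S1 i : #|Sh i 1| = #|Cset i|.
Proof.
pose m j := (fs i t)^-1 * fs j t.
have minj : {in Sh i 1 &, injective m}.
  move=> j j'; rewrite !inE => /asbP /conjr1 Hj /asbP /conjr1 Hj' /mulgI E.
  apply: inj_fs; apply: hom_ext => // k hk; by rewrite Hj // Hj'.
rewrite -(card_in_imset minj); apply: eq_card => c; apply/imsetP/idP.
  move=> [j]; rewrite inE => /asbP /conjr1 Hj ->; rewrite inE; apply/asbP => k hk.
  have [hk1 _] := psi_conj hk.
  have E := Hj _ hk1; rewrite !hom_fs (homV (hom_fs j)) (homV (hom_fs i)) (Hj k hk) in E.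
  set a := fs i t in E *; set b := fs j t in E *; set u := fs i k in E *.
  have E' : a^-1 * (b * u * b^-1) * a = u by rewrite E !mulgA mulVg mul1g mulgVK.
  by rewrite /m -/a -/b -{2}E' !mulgA mulgK mulgVK.
rewrite inE => /asbP Hc.
pose g := fs i t * c.
have hc : forall k, psi k = 0%R -> fs i (t * k * t^-1) = g * fs i k * g^-1.
  move=> k hk; rewrite !hom_fs homV // /g invMg !mulgA -(mulgA _ c) Hc //.
  by rewrite mulgA mulgK.
have hb := build_hom (hom_fs i) hc.
exists (idxf i (buildh (fs i) g)).
  rewrite inE; apply/asbP/conjr1 => k hk.
  by rewrite -idxfP // buildh_k.
by rewrite /m -idxfP // buildh_t // hom1 // mul1g /g mulKg.
Qed.

Lemma card_Sh i h : #|Sh i h| = #|Sh i 1|.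
Proof.
pose mh j := idxf i (fun x => h * fs j x * h^-1).
have minj : injective mh.
  move=> j j' E; apply: inj_fs => x.
  have := idxfP i (conj_hom h (hom_fs j)) x; rewrite -/(mh j) E -idxfP; last exact: conj_hom.
  by move/mulIg/mulgI.
rewrite -[#|Sh i 1|](card_imset _ minj); apply: eq_card => j'; apply/idP/imsetP.
  rewrite inE => /asbP Hj'.
  pose j := idxf i (fun x => h^-1 * fs j' x * h^-1^-1).
  have hj : forall x, fs j x = h^-1 * fs j' x * h^-1^-1 by move=> x; rewrite -idxfP //; exact: conj_hom.
  exists j.
    rewrite inE; apply/asbP/conjr1 => k hk.
    by rewrite hj Hj' // invgK !mulgA mulVg mul1g mulgVK.
  apply: inj_fs => x; rewrite -idxfP; last exact: conj_hom.
  by rewrite hj invgK !mulgA mulgV mul1g mulgK.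
move=> [j]; rewrite !inE => /asbP /conjr1 Hj ->; apply/asbP => k hk.
by rewrite -idxfP ?Hj //; exact: conj_hom.
Qed.

Lemma sum_bool_card (T : finType) (b : pred T) : \sum_(x : T) (b x : nat) = #|[set x | b x]|.
Proof.
rewrite -sum1_card [RHS]big_mkcond /=; apply: eq_bigr => x _; rewrite inE; by case: (b x).
Qed.

Lemma card_cls i : #|[set j | asb (exists h, conjr j i h)]| = #|gT|.
Proof.
set cls := [set j | asb (exists h, conjr j i h)].
have C0 : (0 < #|Cset i|)%N.
  apply/card_gt0P; exists 1; rewrite inE; apply/asbP => k _; by rewrite mul1g mulg1.
apply/eqP; rewrite -(eqn_pmul2r C0); apply/eqP.
have key : \sum_(j : 'I_N) \sum_(h : gT) (asb (conjr j i h) : nat) =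
    \sum_(h : gT) \sum_(j : 'I_N) (asb (conjr j i h) : nat) by exact: exchange_big.
transitivity (\sum_(j : 'I_N) \sum_(h : gT) (asb (conjr j i h) : nat)).
  rewrite -sum_nat_const big_mkcond /=; apply: eq_bigr => j _; rewrite sum_bool_card.
  case: (boolP (j \in cls)) => [|jn].
    rewrite inE => /asbP [h0 Hh0].
    rewrite -[#|Cset i|](card_imset _ (mulgI h0)); apply: eq_card => h.
    rewrite inE; apply/imsetP/asbP.
      move=> [c]; rewrite inE => /asbP Hc -> k hk.
      by rewrite Hh0 // invMg !mulgA -(mulgA _ c) Hc // mulgA mulgK.
    move=> Hh; exists (h0^-1 * h); last by rewrite mulKVg.
    rewrite inE; apply/asbP => k hk.
    have E : h * fs i k * h^-1 = h0 * fs i k * h0^-1 by rewrite -Hh -?Hh0.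
    have E' : h0^-1 * (h * fs i k * h^-1) * h = fs i k * (h0^-1 * h).
      by rewrite E !mulgA mulVg mul1g.
    by rewrite -E' !mulgA mulgVK.
  apply/esym/eq_card0 => h; rewrite inE; apply/asbP => Hh; apply: (negP jn).
  by rewrite inE; apply/asbP; exists h.
rewrite key.
transitivity (\sum_(h : gT) #|Cset i|); last by rewrite sum_nat_const cardE.
apply: eq_bigr => h _; rewrite sum_bool_card.
by rewrite -(card_S1 i) -(card_Sh i h).
Qed.

Lemma count_main : (#|gT| %| N)%N.
Proof.
pose e i j := asb (exists h, conjr j i h).
have eqv : {in [set: 'I_N] & &, equivalence_rel e}.
  move=> x y z _ _ _; split.
    by apply/asbP; exists 1 => k _; rewrite invg1 mulg1 mul1g.
  move=> /asbP [h Hxy]; apply/asbP/asbP => [[h' Hxz]|[h' Hyz]].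
    exists (h' * h^-1) => k hk; rewrite Hxz //.
    have -> : fs x k = h^-1 * fs y k * h by rewrite Hxy // !mulgA mulVg mul1g mulgVK.
    by rewrite invMg invgK !mulgA.
  exists (h' * h) => k hk; by rewrite Hyz // Hxy // invMg !mulgA.
have P := equivalence_partitionP eqv.
have := card_partition P; rewrite cardsT card_ord => ->.
apply: dvdn_sum => A /imsetP [i _ ->].
have -> : [set y in [set: 'I_N] | e i y] = [set j | asb (exists h, conjr j i h)].
  by apply/setP => j; rewrite !inE.
by rewrite card_cls.
Qed.
End Count.

Theorem corollary3p3 (Gam : groupType) (hfg : finitely_generated Gam) :
  (forall (gT : finGroupType) (N : nat), hom_card Gam gT N -> (#|gT| %| N)%N)
  <-> ~ abelianization_finite Gam.
Proof.
split; first exact: dirA.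
move=> nf gT N [fs [h1 h2 h3]].
have [psi [t [hp pt]]] := exists_psi hfg nf.
exact: (count_main hp pt h1 h2 h3).
Qed.
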